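(* Let $N\ge 2$ and $K\ge 2$ be integers, let $M=N^K$, and define costs $d_m=N-1$ for $m\in[1:N]$ and $d_m=N$ for $m\in[N+1:N^K]$. Let $C=\left(1+\frac1N+\frac1{N^2}+\cdots+\frac1{N^{K-1}}\right)^{-1}$ and fix $D$ with $1\le D\le 1/C$. Let $\mathcal{F}_D$ be the set of probability vectors $P=(p_1,\dots,p_{N^K})$ (i.e. $p_m\ge 0$, $\sum_m p_m=1$) satisfying $\frac{1}{N-1}\sum_{m=1}^{N^K}p_m d_m=D$. Let $U$ be the uniform distribution on $[1:N^K]$. (i) For every order $0<\alpha<\infty$ (including $\alpha=1$), the problem of minimizing $D_\alpha(P\,\|\,U)$ over $P\in\mathcal{F}_D$ has the unique minimizer $$p_m=\begin{cases}\dfrac{1-(N-1)(D-1)}{N}, & m\in[1:N],\\[2mm] \dfrac{(N-1)(D-1)}{N^K-N}, & m\in[N+1:N^K].\end{cases}$$ (ii) For $\alpha=\infty$, a distribution $P\in\mathcal{F}_D$ minimizes $D_\infty(P\,\|\,U)$ over $\mathcal{F}_D$ if and only if $p_m=\frac{1-(N-1)(D-1)}{N}$ for all $m\in[1:N]$, and $(p_m)_{m\in[N+1:N^K]}$ is any nonnegative vector with $\sum_{m=N+1}^{N^K}p_m=(N-1)(D-1)$ and $p_m\le \frac{1-(N-1)(D-1)}{N}$ for each $m\in[N+1:N^K]$.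
   Context: Notation: $[i:j]=\{i,i+1,\dots,j\}$. For probability vectors $P=(p_1,\dots,p_M)$, $U=(u_1,\dots,u_M)$ with $u_m>0$, the Rényi divergence of order $\alpha$ (natural logarithm) is $D_\alpha(P\|U)=\frac{1}{\alpha-1}\log\sum_{m=1}^M p_m^\alpha u_m^{1-\alpha}$ for $0<\alpha<\infty$, $\alpha\neq1$; for $\alpha=1$ it is the Kullback–Leibler divergence $D_1(P\|U)=\sum_m p_m\log\frac{p_m}{u_m}$ (with $0\log 0=0$); and $D_\infty(P\|U)=\log\max_m \frac{p_m}{u_m}$. (Interpretation: the $N^K$ query options of the symmetric Tian–Sun–Chen PIR scheme with $N$ databases, $K$ messages and message length $N-1$, where the first $N$ options have download cost $N-1$ and the rest cost $N$; $D$ is the expected download cost normalized by the message length $N-1$.) *)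

(* Defs.v *)
(* R : realType, powR (0 `^ a = 0 for a > 0), ln natural log. *)
From HB Require Import structures.
From mathcomp Require Import all_boot all_order all_algebra.
From mathcomp Require Import all_classical all_reals all_analysis.
Import Order.TTheory GRing.Theory Num.Theory.
Local Open Scope ring_scope.

Definition renyi {R : realType} {M : nat} (alpha : R) (P U : 'I_M -> R) : R :=
  if alpha == 1 then
    \sum_(m < M) (if P m == 0 then 0 else P m * ln (P m / U m))
  else (alpha - 1)^-1 * ln (\sum_(m < M) (P m `^ alpha) * (U m `^ (1 - alpha))).

Definition renyi_inf {R : realType} {M : nat} (P U : 'I_M -> R) : R :=
  ln (\big[Num.max/0]_(m < M) (P m / U m)).

(* uniform distribution on [1:N^K] (index m+1 <-> ordinal m) *)
Definition unif (R : realType) (N K : nat) : 'I_(N ^ K) -> R :=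
  fun _ => ((N ^ K)%:R)^-1.

Definition cost (R : realType) (N K : nat) (m : 'I_(N ^ K)) : R :=
  if (m < N)%N then (N%:R - 1) else N%:R.

Definition Cconst (R : realType) (N K : nat) : R :=
  (\sum_(k < K) (N%:R ^- k))^-1.

Definition feasible {R : realType} (N K : nat) (D : R) (P : 'I_(N ^ K) -> R) : Prop :=
  (forall m, 0 <= P m) /\ \sum_(m < N ^ K) P m = 1 /\
  (N%:R - 1)^-1 * \sum_(m < N ^ K) P m * cost R N K m = D.

Definition is_minimizer {R : realType} (N K : nat) (D : R)
  (f : ('I_(N ^ K) -> R) -> R) (P : 'I_(N ^ K) -> R) : Prop :=
  feasible N K D P /\ forall Q, feasible N K D Q -> f P <= f Q.

Definition pstar {R : realType} (N K : nat) (D : R) (m : 'I_(N ^ K)) : R :=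
  if (m < N)%N then (1 - (N%:R - 1) * (D - 1)) / N%:R
  else (N%:R - 1) * (D - 1) / ((N ^ K)%:R - N%:R).

(* Main.v *)
Require Import Defs.
From HB Require Import structures.
From mathcomp Require Import all_boot all_order all_algebra.
From mathcomp Require Import all_classical all_reals all_analysis.
From mathcomp Require Import ring lra.
Import Order.TTheory GRing.Theory Num.Theory.
Local Open Scope ring_scope.


Lemma ln_lt_sub1 {R : realType} {y : R} : 0 < y -> y != 1 -> ln y < y - 1.
Proof.
move=> y0 y1.
have h : ln y != 0 by rewrite ln_eq0.
have := expR_gt1Dx h; rewrite lnK ?posrE //; lra.
Qed.

Lemma amgm {R : realType} {a y : R} : 0 < a -> a < 1 -> 0 < y -> y != 1 ->
  y `^ a < a * y + (1 - a).
Proof.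
move=> a0 a1 y0 y1.
have l0 : ln y != 0 by rewrite ln_eq0.
rewrite /powR gt_eqF //.
set l := ln y; set t := a * l.
have e1 : expR l = expR t * expR (l - t) by rewrite -expRD; congr expR; ring.
have e2 : 1 = expR t * expR (- t) by rewrite -expRD subrr expR0.
have h1 : 1 + (l - t) < expR (l - t).
  apply: expR_gt1Dx; rewrite /t; apply/eqP => h.
  have : (1 - a) * l = 0 by rewrite mulrBl mul1r h.
  by move/eqP; rewrite mulf_eq0 (negPf l0) orbF subr_eq0 => /eqP ha; move: a1; rewrite ha ltxx.
have h2 : 1 + (- t) < expR (- t).
  apply: expR_gt1Dx; rewrite oppr_eq0 /t mulf_neq0 // gt_eqF //.
have E0 := expR_gt0 t.
have ey : y = expR l by rewrite /l lnK ?posrE.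
have k1 : (a * expR t) * (1 + (l - t)) < (a * expR t) * expR (l - t).
  by rewrite ltr_pM2l // mulr_gt0.
have k2 : ((1 - a) * expR t) * (1 - t) < ((1 - a) * expR t) * expR (- t).
  by rewrite ltr_pM2l // mulr_gt0 // subr_gt0.
have k3 : (1 - a) * expR t * expR (- t) = 1 - a by rewrite -mulrA -e2 mulr1.
have k4 : a * expR t * expR (l - t) = a * y by rewrite -mulrA -e1 ey.
have k5 : (a * expR t) * (1 + (l - t)) + ((1 - a) * expR t) * (1 - t) = expR t.
  rewrite /t; ring.
rewrite mulrC; lra.
Qed.
Definition tanP {R : realType} (phi : R -> R) (c : R) :=
  exists k, forall y, 0 <= y -> y != c -> phi c + k * (y - c) < phi y.

Lemma tan_pow_lt1 {R : realType} (a c : R) : 0 < a -> a < 1 -> 0 < c ->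
  tanP (fun x => - x `^ a) c.
Proof.
move=> a0 a1 c0; exists (- (a * c `^ a / c)) => y y0 yc.
have ca := powR_gt0 a c0.
have cn : c != 0 by rewrite gt_eqF.
case: (eqVneq y 0) => [->|yn].
  rewrite powR0 ?gt_eqF // oppr0 sub0r mulrNN.
  have -> : a * c `^ a / c * c = a * c `^ a by rewrite divfK.
  have : 0 < (1 - a) * c `^ a by rewrite mulr_gt0 // subr_gt0.
  have : 0 < (1 - a) * c `^ a by rewrite mulr_gt0 // subr_gt0.
  lra.
have yp : 0 < y by rewrite lt_def yn.
set z := y / c.
have zp : 0 < z by rewrite divr_gt0.
have z1 : z != 1 by rewrite /z; apply: contra yc => /eqP h; apply/eqP; rewrite -[y](divfK cn) h mul1r.
have yz : y = c * z by rewrite /z mulrC divfK.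
have := amgm a0 a1 zp z1.
rewrite yz powRM ?ltW //.
move=> h.
have h2 : c `^ a * z `^ a < c `^ a * (a * z + (1 - a)) by rewrite ltr_pM2l.
have e : c `^ a * (a * z + (1 - a)) = c `^ a + a * c `^ a / c * (c * z - c).
  rewrite /z; field; exact: cn.
lra.
Qed.

Lemma tan_pow_gt1 {R : realType} (a c : R) : 1 < a -> 0 < c ->
  tanP (fun x => x `^ a) c.
Proof.
move=> a1 c0; exists (a * c `^ a / c) => y y0 yc.
have a0 : 0 < a by lra.
have ca := powR_gt0 a c0.
have cn : c != 0 by rewrite gt_eqF.
case: (eqVneq y 0) => [->|yn].
  rewrite powR0 ?gt_eqF // sub0r mulrN.
  have -> : a * c `^ a / c * c = a * c `^ a by rewrite divfK.
  have : 0 < (a - 1) * c `^ a by rewrite mulr_gt0 // subr_gt0.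
  lra.
have yp : 0 < y by rewrite lt_def yn.
set z := y / c.
have zp : 0 < z by rewrite divr_gt0.
have z1 : z != 1 by rewrite /z; apply: contra yc => /eqP h; apply/eqP; rewrite -[y](divfK cn) h mul1r.
have yz : y = c * z by rewrite /z mulrC divfK.
set w := z `^ a.
have wp : 0 < w by rewrite powR_gt0.
have wz : w `^ a^-1 = z by rewrite /w -powRrM mulfV ?gt_eqF // powRr1 // ltW.
have w1 : w != 1 by apply: contra z1 => /eqP h; rewrite -wz h powR1.
have b0 : 0 < a^-1 by rewrite invr_gt0.
have b1 : a^-1 < 1 by rewrite invf_lt1.
have := amgm b0 b1 wp w1; rewrite wz => h.
have h' : a * z < w + a - 1.
  have : a * z < a * (a^-1 * w + (1 - a^-1)) by rewrite ltr_pM2l.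
  have -> : a * (a^-1 * w + (1 - a^-1)) = w + a - 1 by field; rewrite gt_eqF.
  done.
rewrite yz powRM ?ltW // -/w.
have h2 : c `^ a * (1 + a * (z - 1)) < c `^ a * w.
  by rewrite ltr_pM2l //; lra.
have e : c `^ a * (1 + a * (z - 1)) = c `^ a + a * c `^ a / c * (c * z - c).
  by field.
lra.
Qed.

Lemma tan_kl {R : realType} (u c : R) : 0 < u -> 0 < c ->
  tanP (fun x => if x == 0 then 0 else x * ln (x / u)) c.
Proof.
move=> u0 c0; exists (ln (c / u) + 1) => y y0 yc.
rewrite (gt_eqF c0).
case: (eqVneq y 0) => [->|yn].
  rewrite ?eqxx /=; lra.
have yp : 0 < y by rewrite lt_def yn.
have e1 : ln (y / u) = ln (c / u) + ln (y / c).
  rewrite -lnM ?posrE ?divr_gt0 //; congr ln; field.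
  by rewrite !gt_eqF.
have e2 : ln (y / c) = - ln (c / y) by rewrite -lnV ?posrE ?divr_gt0 // invf_div.
have cy : c / y != 1.
  apply: contra yc => /eqP h; apply/eqP.
  by rewrite -[c](divfK yn) h mul1r.
have := ln_lt_sub1 (divr_gt0 c0 yp) cy.
move=> h.
have h2 : y * ln (c / y) < y * (c / y - 1) by rewrite ltr_pM2l.
have e3 : y * (c / y - 1) = c - y by field; rewrite gt_eqF.
rewrite e1 e2.
nra.
Qed.
Lemma group_le {R : realType} (n : nat) (A : pred 'I_n) (x : 'I_n -> R)
  (phi : R -> R) (c : R) :
  0 <= c -> (forall m, A m -> 0 <= x m) -> \sum_(m < n | A m) (x m - c) = 0 ->
  (0 < c -> tanP phi c) ->
  \sum_(m < n | A m) phi c <= \sum_(m < n | A m) phi (x m) /\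
  ((exists m, A m && (x m != c)) ->
     \sum_(m < n | A m) phi c < \sum_(m < n | A m) phi (x m)).
Proof.
move=> c0 x0 hs ht.
case: (eqVneq c 0) => [ce|cn].
  subst c.
  have hz : forall m, A m -> x m = 0.
    move=> m Am; have := psumr_eq0P (P := A) (F := fun m => x m - 0).
    move=> /(_ _ hs m Am); rewrite subr0; apply.
    by move=> i Ai; rewrite subr0 x0.
  have e : \sum_(m < n | A m) phi 0 = \sum_(m < n | A m) phi (x m).
    by apply: eq_bigr => m Am; rewrite hz.
  split; first by rewrite e.
  by case=> m /andP[Am]; rewrite hz // eqxx.
have cp : 0 < c by rewrite lt_def cn.
have [k hk] := ht cp.
have hle : forall m, A m -> phi c + k * (x m - c) <= phi (x m).
  move=> m Am; case: (eqVneq (x m) c) => [->|ne].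
    by rewrite subrr mulr0 addr0.
  by apply/ltW/hk => //; apply: x0.
have es : \sum_(m < n | A m) (phi c + k * (x m - c)) = \sum_(m < n | A m) phi c.
  by rewrite big_split /= -mulr_sumr hs mulr0 addr0.
split.
  by rewrite -es; apply: ler_sum.
case=> m0 /andP[Am0 ne].
rewrite -es (bigD1 m0) //= [X in _ < X](bigD1 m0) //=.
apply: ltr_leD; first by apply: hk => //; apply: x0.
by apply: ler_sum => i /andP[Ai _]; apply: hle.
Qed.


Lemma geo {R : realType} (N K : nat) : (1 <= N)%N ->
  (N%:R - 1) * (Cconst R N K)^-1 = N%:R - N%:R * (N%:R^-1)^+K :> R.
Proof.
move=> hN.
have Np : (0 : R) < N%:R by rewrite ltr0n.
rewrite /Cconst invrK.
under eq_bigr do rewrite -exprVn.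
set x := (N%:R : R)^-1.
have hx : N%:R * x = 1 by rewrite mulfV // gt_eqF.
have := subrX1 x K.
set S := \sum_(i < K) x ^+ i => h.
have -> : (N%:R - 1 : R) = - (N%:R * (x - 1)) by rewrite mulrBr hx mulr1 opprB.
rewrite mulNr -mulrA -h; lra.
Qed.

Lemma s_bound {R : realType} (N K : nat) (D : R) : (1 <= N)%N ->
  D <= (Cconst R N K)^-1 ->
  N%:R <= (1 - (N%:R - 1) * (D - 1)) * (N ^ K)%:R.
Proof.
move=> hN hD.
have Np : (0 : R) < N%:R by rewrite ltr0n.
have N1 : (0 : R) <= N%:R - 1 by rewrite subr_ge0 ler1n.
have g := @geo R N K hN.
set x := (N%:R : R)^-1 in g.
have hx : N%:R * x = 1 by rewrite mulfV // gt_eqF.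
have NKp : (0 : R) < (N ^ K)%:R by rewrite ltr0n expn_gt0 (leq_trans _ hN).
have e : x ^+ K * (N ^ K)%:R = 1 by rewrite natrX -exprMn mulrC hx expr1n.
have h1 : (N%:R - 1) * D <= (N%:R - 1) * (Cconst R N K)^-1 by rewrite ler_wpM2l.
have h2 : N%:R * x ^+ K <= 1 - (N%:R - 1) * (D - 1) by lra.
have := ler_wpM2r (ltW NKp) h2.
by rewrite -mulrA e mulr1.
Qed.


Lemma cnt1 {R : realType} (N K : nat) (c : R) : (N <= N ^ K)%N ->
  \sum_(m < N ^ K | (m < N)%N) c = N%:R * c.
Proof.
move=> h.
by rewrite -(big_ord_widen (N ^ K) (fun _ => c) h) sumr_const card_ord mulr_natl.
Qed.

Lemma cnt2 {R : realType} (N K : nat) (c : R) : (N <= N ^ K)%N ->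
  \sum_(m < N ^ K | ~~ (m < N)%N) c = ((N ^ K)%:R - N%:R) * c.
Proof.
move=> h.
have e0 : \sum_(m < N ^ K) c = c *+ (N ^ K) by rewrite sumr_const card_ord.
have e := e0; rewrite (bigID (fun m : 'I_(N ^ K) => (m < N)%N)) /= cnt1 // in e.
have -> : \sum_(m < N ^ K | ~~ (m < N)%N) c = c *+ (N ^ K) - N%:R * c.
  by rewrite -e addrC addrK.
rewrite mulrBl mulr_natl; congr (_ - _); rewrite mulr_natl.
reflexivity.
Qed.

Lemma NleNK {N K : nat} : (2 <= N)%N -> (2 <= K)%N -> (N < N ^ K)%N.
Proof.
move=> hN hK.
have : (N ^ 1 < N ^ K)%N by rewrite ltn_exp2l // (leq_trans _ hN).
by rewrite expn1.
Qed.

Lemma feas_group {R : realType} {N K : nat} {D : R} {Q : 'I_(N ^ K) -> R} :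
  (2 <= N)%N -> feasible N K D Q ->
  \sum_(m < N ^ K | (m < N)%N) Q m = 1 - (N%:R - 1) * (D - 1) /\
  \sum_(m < N ^ K | ~~ (m < N)%N) Q m = (N%:R - 1) * (D - 1).
Proof.
move=> hN [_ [hs hc]].
have N1 : (0 : R) < N%:R - 1 by rewrite subr_gt0 ltr1n.
rewrite (bigID (fun m : 'I_(N ^ K) => (m < N)%N)) /= in hs.
rewrite (bigID (fun m : 'I_(N ^ K) => (m < N)%N)) /= in hc.
set S1 := \sum_(m < N ^ K | (m < N)%N) Q m in hs *.
set S2 := \sum_(m < N ^ K | ~~ (m < N)%N) Q m in hs *.
have e1 : \sum_(m < N ^ K | (m < N)%N) Q m * cost R N K m = S1 * (N%:R - 1).
  rewrite /S1 mulr_suml; apply: eq_bigr => m hm; by rewrite /cost hm.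
have e2 : \sum_(m < N ^ K | ~~ (m < N)%N) Q m * cost R N K m = S2 * N%:R.
  rewrite /S2 mulr_suml; apply: eq_bigr => m hm; by rewrite /cost (negPf hm).
rewrite e1 e2 in hc.
have hc' : S1 * (N%:R - 1) + S2 * N%:R = (N%:R - 1) * D.
  by rewrite -hc mulrA mulfV ?mul1r // gt_eqF.
have eS2 : S2 = 1 - S1 by rewrite -hs addrC addrK.
rewrite eS2 in hc'.
have eS1 : S1 = N%:R - (N%:R - 1) * D by rewrite -hc'; ring.
split; first by rewrite eS1; ring.
by rewrite eS2 eS1; ring.
Qed.

Lemma pstar_feas {R : realType} (N K : nat) (D : R) :
  (2 <= N)%N -> (2 <= K)%N -> 1 <= D -> D <= (Cconst R N K)^-1 ->
  feasible N K D (pstar N K D).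
Proof.
move=> hN hK hD1 hD2.
have hNK := NleNK hN hK.
have hle : (N <= N ^ K)%N := ltnW hNK.
have Np : (0 : R) < N%:R by rewrite ltr0n (leq_trans _ hN).
have N1 : (0 : R) < N%:R - 1 by rewrite subr_gt0 ltr1n.
have NK : (0 : R) < (N ^ K)%:R - N%:R by rewrite subr_gt0 ltr_nat.
have sb := @s_bound R N K D (leq_trans (isT : (1 <= 2)%N) hN) hD2.
set s := 1 - (N%:R - 1) * (D - 1) in sb *.
have NKp : (0 : R) < (N ^ K)%:R by rewrite ltr0n expn_gt0 (leq_trans _ hN).
have sp : 0 < s.
  rewrite ltNge; apply/negP => sn.
  have : s * (N ^ K)%:R <= 0 by rewrite mulr_le0_ge0 // ltW.
  lra.
have c2p : 0 <= (N%:R - 1) * (D - 1) / ((N ^ K)%:R - N%:R).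
  apply: divr_ge0; [apply: mulr_ge0; lra | lra].
split.
  move=> m; rewrite /pstar; case: ifP => _ //; by rewrite divr_ge0 ?ltW.
rewrite (bigID (fun m : 'I_(N ^ K) => (m < N)%N)) /=.
rewrite (eq_bigr (fun _ => s / N%:R)); last by move=> m hm; rewrite /pstar hm.
rewrite [X in _ + X = _](eq_bigr (fun _ => (N%:R - 1) * (D - 1) / ((N ^ K)%:R - N%:R))); last first.
  move=> m hm; rewrite /pstar; by rewrite (negbTE hm).
rewrite (@cnt1 R N K _ hle) (@cnt2 R N K _ hle).
split.
  rewrite /s; field; rewrite !gt_eqF //.
rewrite (bigID (fun m : 'I_(N ^ K) => (m < N)%N)) /=.
rewrite (eq_bigr (fun _ => s / N%:R * (N%:R - 1))); last by move=> m hm; rewrite /pstar /cost hm.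
rewrite [X in _ * (_ + X) = _](eq_bigr (fun _ => (N%:R - 1) * (D - 1) / ((N ^ K)%:R - N%:R) * N%:R)); last first.
  move=> m hm; rewrite /pstar /cost; by rewrite (negbTE hm).
rewrite (@cnt1 R N K _ hle) (@cnt2 R N K _ hle).
rewrite /s; field; rewrite !gt_eqF //.
Qed.

Lemma c_facts {R : realType} {N K : nat} {D : R} :
  (2 <= N)%N -> (2 <= K)%N -> 1 <= D -> D <= (Cconst R N K)^-1 ->
  0 < (1 - (N%:R - 1) * (D - 1)) / N%:R /\
  0 <= (N%:R - 1) * (D - 1) / ((N ^ K)%:R - N%:R) /\
  (N%:R - 1) * (D - 1) / ((N ^ K)%:R - N%:R) <= (1 - (N%:R - 1) * (D - 1)) / N%:R.
Proof.
move=> hN hK hD1 hD2.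
have hNK := NleNK hN hK.
have Np : (0 : R) < N%:R by rewrite ltr0n (leq_trans _ hN).
have N1 : (0 : R) < N%:R - 1 by rewrite subr_gt0 ltr1n.
have NK : (0 : R) < (N ^ K)%:R - N%:R by rewrite subr_gt0 ltr_nat.
have sb := @s_bound R N K D (leq_trans (isT : (1 <= 2)%N) hN) hD2.
set s := 1 - (N%:R - 1) * (D - 1) in sb *.
have NKp : (0 : R) < (N ^ K)%:R by rewrite ltr0n expn_gt0 (leq_trans _ hN).
have sp : 0 < s.
  rewrite ltNge; apply/negP => sn.
  have : s * (N ^ K)%:R <= 0 by rewrite mulr_le0_ge0 // ltW.
  lra.
split; first by rewrite divr_gt0.
split; first by apply: divr_ge0; [apply: mulr_ge0; lra | lra].
have e : (N%:R - 1) * (D - 1) = 1 - s by rewrite /s; ring.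
rewrite e ler_pdivrMr //.
have -> : s / N%:R * ((N ^ K)%:R - N%:R) = s * (N ^ K)%:R / N%:R - s.
  by field; by rewrite gt_eqF.
have : 1 <= s * (N ^ K)%:R / N%:R by rewrite ler_pdivlMr // mul1r.
lra.
Qed.

Lemma Gcore {R : realType} (N K : nat) (D : R) (phi : R -> R) :
  (2 <= N)%N -> (2 <= K)%N -> 1 <= D -> D <= (Cconst R N K)^-1 ->
  (forall c, 0 < c -> tanP phi c) ->
  forall Q, feasible N K D Q ->
   \sum_(m < N ^ K) phi (pstar N K D m) <= \sum_(m < N ^ K) phi (Q m) /\
   ((exists m, Q m != pstar N K D m) ->
     \sum_(m < N ^ K) phi (pstar N K D m) < \sum_(m < N ^ K) phi (Q m)).
Proof.
move=> hN hK hD1 hD2 ht Q hQ.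
have hNK := NleNK hN hK.
have hle : (N <= N ^ K)%N := ltnW hNK.
have Np : (0 : R) < N%:R by rewrite ltr0n (leq_trans _ hN).
have NK : (0 : R) < (N ^ K)%:R - N%:R by rewrite subr_gt0 ltr_nat.
have [c1p [c2p _]] := c_facts hN hK hD1 hD2.
set c1 := (1 - (N%:R - 1) * (D - 1)) / N%:R in c1p.
set c2 := (N%:R - 1) * (D - 1) / ((N ^ K)%:R - N%:R) in c2p.
have p1 : forall m : 'I_(N ^ K), (m < N)%N -> pstar N K D m = c1.
  by move=> m hm; rewrite /pstar hm.
have p2 : forall m : 'I_(N ^ K), ~~ (m < N)%N -> pstar N K D m = c2.
  by move=> m hm; rewrite /pstar (negbTE hm).
have [g1 g2] := feas_group hN hQ.
have Q0 := hQ.1.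
have s1 : \sum_(m < N ^ K | (m < N)%N) (Q m - c1) = 0.
  rewrite sumrB g1 (@cnt1 R N K _ hle) /c1; field; by rewrite gt_eqF.
have s2 : \sum_(m < N ^ K | ~~ (m < N)%N) (Q m - c2) = 0.
  rewrite sumrB g2 (@cnt2 R N K _ hle) /c2; field; by rewrite gt_eqF.
have [le1 lt1] := @group_le R (N ^ K) (fun m => (m < N)%N) Q phi c1 (ltW c1p) (fun m _ => Q0 m) s1 (ht c1).
have [le2 lt2] := @group_le R (N ^ K) (fun m => ~~ (m < N)%N) Q phi c2 c2p (fun m _ => Q0 m) s2 (ht c2).
have eP : \sum_(m < N ^ K) phi (pstar N K D m) =
    \sum_(m < N ^ K | (m < N)%N) phi c1 + \sum_(m < N ^ K | ~~ (m < N)%N) phi c2.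
  rewrite (bigID (fun m : 'I_(N ^ K) => (m < N)%N)) /=.
  congr (_ + _); apply: eq_bigr => m hm; by [rewrite p1 | rewrite p2].
have eQ := bigID (fun m : 'I_(N ^ K) => (m < N)%N) predT (fun m => phi (Q m)).
rewrite eP eQ /=.
split; first exact: lerD.
case=> m hm.
case: (boolP (m < N)%N) => hmN.
  apply: ltr_leD => //; apply: lt1; exists m; by rewrite hmN -(p1 m hmN).
apply: ler_ltD => //; apply: lt2; exists m; by rewrite hmN -(p2 m hmN).
Qed.

Lemma abs_min {R : realType} (N K : nat) (D : R)
  (f : ('I_(N ^ K) -> R) -> R) (ps : 'I_(N ^ K) -> R) :
  feasible N K D ps ->
  (forall Q, feasible N K D Q ->
     f ps <= f Q /\ ((exists m, Q m != ps m) -> f ps < f Q)) ->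
  forall P, is_minimizer N K D f P <-> (forall m, P m = ps m).
Proof.
move=> hps hQ P; split.
  move=> [hP hmin].
  case: (boolP [forall m, P m == ps m]) => h.
    by move=> m; apply/eqP; move/forallP: h.
  move/forallPn: h => [m hm].
  have := (hQ P hP).2 (ex_intro _ m hm).
  have := hmin ps hps.
  move=> a b; have := lt_le_trans b a; by rewrite ltxx.
move=> h.
have -> : P = ps by apply: funext => m; exact: h.
split => //.
by move=> Q hq; exact: (hQ Q hq).1.
Qed.

Lemma pos_mass {R : realType} (N K : nat) (D : R) (Q : 'I_(N ^ K) -> R) :
  feasible N K D Q -> exists m, 0 < Q m.
Proof.
move=> [h0 [h1 _]].
case: (boolP [exists m, 0 < Q m]) => h.
  by move/existsP: h.
exfalso.
have z : forall m, Q m = 0.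
  move=> m; apply/eqP; rewrite eq_le h0 andbT.
  move/existsPn: h => /(_ m); by rewrite ltNge negbK.
move: h1; rewrite big1 // => e.
by have := @oner_neq0 R; rewrite -e eqxx.
Qed.

Lemma pos_sum {R : realType} (N K : nat) (D : R) (Q : 'I_(N ^ K) -> R) (a : R) :
  feasible N K D Q -> 0 < \sum_(m < N ^ K) Q m `^ a.
Proof.
move=> hQ.
have [m hm] := @pos_mass R N K D Q hQ.
rewrite (bigD1 m) //=.
apply: ltr_pwDl; first exact: powR_gt0.
by apply: sumr_ge0 => i _; apply: powR_ge0.
Qed.

Lemma part1 {R : realType} (N K : nat) (D : R) :
  (2 <= N)%N -> (2 <= K)%N -> 1 <= D -> D <= (Cconst R N K)^-1 ->
  forall alpha : R, 0 < alpha ->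
     forall P : 'I_(N ^ K) -> R,
       is_minimizer N K D (fun Q => renyi alpha Q (unif R N K)) P <->
       (forall m, P m = pstar N K D m).
Proof.
move=> hN hK hD1 hD2 a a0 P.
have hps := @pstar_feas R N K D hN hK hD1 hD2.
apply: abs_min => // Q hQ.
have up : (0 : R) < ((N ^ K)%:R)^-1 by rewrite invr_gt0 ltr0n expn_gt0 (leq_trans _ hN).
set u := ((N ^ K)%:R : R)^-1 in up.
case: (eqVneq a 1) => [->|a1].
  rewrite /renyi eqxx /unif /= -/u.
have G := @Gcore R N K D (fun x => if x == 0 then 0 else x * ln (x / u)) hN hK hD1 hD2 (fun c cp => @tan_kl R u c up cp) Q hQ.
  exact: G.
have key : forall Q' : 'I_(N ^ K) -> R, renyi a Q' (unif R N K) =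
    (a - 1)^-1 * ln ((\sum_(m < N ^ K) Q' m `^ a) * u `^ (1 - a)).
  by move=> Q'; rewrite /renyi (negbTE a1) /unif -/u mulr_suml.
rewrite !key.
have wp : 0 < u `^ (1 - a) by rewrite powR_gt0.
have Sp := @pos_sum R N K D _ a hps.
have SQ := @pos_sum R N K D _ a hQ.
set A := \sum_(m < N ^ K) pstar N K D m `^ a in Sp *.
set B := \sum_(m < N ^ K) Q m `^ a in SQ *.
case: (ltgtP a 1) => ha; last by move: a1; rewrite ha eqxx.
  have [le lt] := @Gcore R N K D _ hN hK hD1 hD2 (fun c cp => @tan_pow_lt1 R a c a0 ha cp) Q hQ.
  rewrite !sumrN lerN2 -/A -/B in le.
  rewrite !sumrN ltrN2 -/A -/B in lt.
  have an : (a - 1)^-1 < 0 by rewrite invr_lt0 subr_lt0.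
  split.
    apply: ler_wnM2l; first exact: ltW.
    by rewrite ler_ln ?posrE ?mulr_gt0 // ler_pM2r.
  move=> hm; rewrite ltr_nM2l // ltr_ln ?posrE ?mulr_gt0 // ltr_pM2r //.
  exact: lt hm.
have [le lt] := @Gcore R N K D _ hN hK hD1 hD2 (fun c cp => @tan_pow_gt1 R a c ha cp) Q hQ.
rewrite -/A -/B in le lt.
have ap : 0 < (a - 1)^-1 by rewrite invr_gt0 subr_gt0.
split.
  apply: ler_wpM2l; first exact: ltW.
  by rewrite ler_ln ?posrE ?mulr_gt0 // ler_pM2r.
move=> hm; rewrite ltr_pM2l // ltr_ln ?posrE ?mulr_gt0 // ltr_pM2r //.
exact: lt hm.
Qed.

Lemma bigmax_ub {R : realType} (n : nat) (F : 'I_n -> R) (b : R) :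
  (forall m, F m <= b) -> 0 <= b -> \big[Num.max/0]_(m < n) F m <= b.
Proof.
move=> hF hb.
apply: (big_ind (fun v => v <= b)) => //.
by move=> x y hx hy; rewrite ge_max hx hy.
Qed.

Lemma bigmax_lb {R : realType} (n : nat) (F : 'I_n -> R) (m0 : 'I_n) :
  F m0 <= \big[Num.max/0]_(m < n) F m.
Proof. by rewrite (bigD1 m0) //= le_max lexx. Qed.

Lemma part2 {R : realType} (N K : nat) (D : R) :
  (2 <= N)%N -> (2 <= K)%N -> 1 <= D -> D <= (Cconst R N K)^-1 ->
  (forall P : 'I_(N ^ K) -> R,
     is_minimizer N K D (fun Q => renyi_inf Q (unif R N K)) P <->
     feasible N K D P /\
     (forall m : 'I_(N ^ K), (m < N)%N -> P m = (1 - (N%:R - 1) * (D - 1)) / N%:R) /\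
     (forall m : 'I_(N ^ K), (N <= m)%N ->
        0 <= P m /\ P m <= (1 - (N%:R - 1) * (D - 1)) / N%:R) /\
     \sum_(m < N ^ K | (N <= m)%N) P m = (N%:R - 1) * (D - 1)).
Proof.
move=> hN hK hD1 hD2 P.
have hps := @pstar_feas R N K D hN hK hD1 hD2.
have hNK := NleNK hN hK.
have hle : (N <= N ^ K)%N := ltnW hNK.
have Np : (0 : R) < N%:R by rewrite ltr0n (leq_trans _ hN).
have [c1p [c2p c21]] := c_facts hN hK hD1 hD2.
set c1 := (1 - (N%:R - 1) * (D - 1)) / N%:R in c1p c21 *.
set c2 := (N%:R - 1) * (D - 1) / ((N ^ K)%:R - N%:R) in c2p c21.
have up : (0 : R) < ((N ^ K)%:R)^-1 by rewrite invr_gt0 ltr0n expn_gt0 (leq_trans _ hN).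
set u := ((N ^ K)%:R : R)^-1 in up.
have eR : forall Q : 'I_(N ^ K) -> R, renyi_inf Q (unif R N K) =
    ln (\big[Num.max/0]_(m < N ^ K) (Q m / u)) by [].
set Mx := fun Q : 'I_(N ^ K) -> R => \big[Num.max/0]_(m < N ^ K) (Q m / u).
have v0p : 0 < c1 / u by rewrite divr_gt0.
have lowb : forall Q, feasible N K D Q -> c1 / u <= Mx Q.
  move=> Q hQ; rewrite /Mx /=.
  have [g1 _] := feas_group hN hQ.
  case: (boolP [exists m : 'I_(N ^ K), ((m < N)%N && (c1 <= Q m))]) => h.
    move/existsP: h => [m /andP[_ hm]].
    apply: le_trans _ (@bigmax_lb R _ (fun m => Q m / u) m).
    by rewrite ler_pM2r // invr_gt0.
  exfalso.
  have hlt : forall m : 'I_(N ^ K), (m < N)%N -> Q m < c1.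
    move=> m hm; move/existsPn: h => /(_ m); by rewrite hm /= -ltNge.
  have N0 : (0 < N ^ K)%N by rewrite expn_gt0 (leq_trans _ hN).
  set m0 := Ordinal N0.
  have m0N : (m0 < N)%N by rewrite /= (leq_trans _ hN).
  have : \sum_(m < N ^ K | (m < N)%N) Q m < \sum_(m < N ^ K | (m < N)%N) c1.
    rewrite (bigD1 m0) //= [X in _ < X](bigD1 m0) //=.
    apply: ltr_leD; first exact: hlt.
    by apply: ler_sum => i /andP[hi _]; apply/ltW/hlt.
  rewrite g1 (@cnt1 R N K _ hle).
  have -> : N%:R * c1 = 1 - (N%:R - 1) * (D - 1) by rewrite /c1; field; by rewrite gt_eqF.
  by rewrite ltxx.
have upb : forall Q : 'I_(N ^ K) -> R, (forall m, Q m <= c1) -> Mx Q <= c1 / u.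
  move=> Q hQ; rewrite /Mx /=; apply: bigmax_ub; last exact: ltW.
  move=> m; rewrite ler_pM2r; [exact: hQ | by rewrite invr_gt0].
have allle : forall Q : 'I_(N ^ K) -> R, Mx Q <= c1 / u -> forall m, Q m <= c1.
  move=> Q; rewrite /Mx /= => hQ m.
  have := le_trans (@bigmax_lb R _ (fun m => Q m / u) m) hQ.
  by rewrite ler_pM2r // invr_gt0.
have geq1 : forall Q, feasible N K D Q -> (forall m, Q m <= c1) ->
    forall m : 'I_(N ^ K), (m < N)%N -> Q m = c1.
  move=> Q hQ hl.
  have [g1 _] := feas_group hN hQ.
  have s0 : \sum_(m < N ^ K | (m < N)%N) (c1 - Q m) = 0.
    rewrite sumrB g1 (@cnt1 R N K _ hle) /c1; field; by rewrite gt_eqF.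
  move=> m hm.
  have := psumr_eq0P (P := fun m : 'I_(N ^ K) => (m < N)%N) (F := fun m => c1 - Q m).
  move=> /(_ _ s0 m hm) => h.
  have : c1 - Q m = 0 by apply: h => i _; rewrite subr_ge0.
  move/eqP; rewrite subr_eq0 => /eqP; by move=> ->.
have psle : forall m, pstar N K D m <= c1.
  by move=> m; rewrite /pstar; case: ifP.
rewrite /is_minimizer !eR -/Mx.
split.
  move=> [hP hmin].
  have h1 := hmin _ hps; rewrite !eR -/Mx in h1.
  have lP := lowb _ hP.
  have lps := lowb _ hps.
  rewrite ler_ln ?posrE in h1; last 2 first.
  - exact: lt_le_trans v0p lP.
  - exact: lt_le_trans v0p lps.
  have hPle : forall m, P m <= c1.
    apply: allle; apply: le_trans h1 _; exact: upb.
  split => //.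
  split; first exact: geq1.
  split.
    by move=> m _; split => //; exact: hP.1.
  have [_ g2] := feas_group hN hP.
  rewrite -g2; apply: eq_bigl => m; by rewrite leqNgt.
move=> [hP [h1 [h2 _]]].
have hPle : forall m, P m <= c1.
  move=> m; case: (ltnP m N) => hm; first by rewrite h1.
  exact: (h2 m hm).2.
split => // Q hQ.
rewrite !eR -/Mx ler_ln ?posrE.
- apply: le_trans (upb _ hPle) _; exact: lowb.
- exact: lt_le_trans v0p (lowb _ hP).
- exact: lt_le_trans v0p (lowb _ hQ).
Qed.

Theorem lemma1 (R : realType) (N K : nat) (D : R) :
  (2 <= N)%N -> (2 <= K)%N ->
  1 <= D -> D <= (Cconst R N K)^-1 ->
  (forall alpha : R, 0 < alpha ->
     forall P : 'I_(N ^ K) -> R,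
       is_minimizer N K D (fun Q => renyi alpha Q (unif R N K)) P <->
       (forall m, P m = pstar N K D m)) /\
  (forall P : 'I_(N ^ K) -> R,
     is_minimizer N K D (fun Q => renyi_inf Q (unif R N K)) P <->
     feasible N K D P /\
     (forall m : 'I_(N ^ K), (m < N)%N -> P m = (1 - (N%:R - 1) * (D - 1)) / N%:R) /\
     (forall m : 'I_(N ^ K), (N <= m)%N ->
        0 <= P m /\ P m <= (1 - (N%:R - 1) * (D - 1)) / N%:R) /\
     \sum_(m < N ^ K | (N <= m)%N) P m = (N%:R - 1) * (D - 1)).
Proof.
move=> hN hK hD1 hD2; split.
  exact: part1.
exact: part2.
Qed.
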